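(* Let $n\ge1$, let $C$ be a cyclic group of order $n$ with generator $c_0$, and let $A$ be a finite abelian group with $A=\langle e_r\rangle\times\cdots\times\langle e_1\rangle$, where $e_i$ has order $d_i$. Let $G$ and $H$ be groups each containing $C$ as a central subgroup, with surjections $\pi_G:G\to A$, $\pi_H:H\to A$ with kernel $C$. Assume $\phi_G=\phi_H$, and that for each $1\le i\le r$ there exist $g_i\in G$, $h_i\in H$ with $\pi_G(g_i)=e_i=\pi_H(h_i)$ such that $g_i$ and $h_i$ have the same order, this order being either $d_i$ or $2d_i$. Then there exists a group isomorphism $f:G\to H$ which restricts to the identity on $C$ (in particular $f(c_0)=c_0$).
   Context: $[g,h]=ghg^{-1}h^{-1}$. For a group $G$ containing a central cyclic subgroup $C=\langle c_0\rangle$ of order $n$ with abelian quotient $A$ via $\pi_G$, the form $\phi_G:A\times A\to\mathbb{Z}/n$ is defined by $[\hat a,\hat b]=c_0^{\phi_G(a,b)}$ for any lifts $\hat a,\hat b$ of $a,b$ (this is independent of the lifts). *)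

(* Defs.v *)
From HB Require Import structures.
From mathcomp Require Import all_boot all_fingroup all_solvable.
Set Implicit Arguments. Unset Strict Implicit. Unset Printing Implicit Defensive.
Import GroupScope.

(* The paper's commutator convention: [g,h] = g h g^-1 h^-1
   (MathComp's [~ g, h] is g^-1 h^-1 g h, so we define the paper's one). *)
Definition commP (gT : finGroupType) (x y : gT) : gT := x * y * x^-1 * y^-1.

Definition lift (gT aT : finGroupType) (G : {set gT}) (pi : gT -> aT) (a : aT) : gT :=
  repr (G :&: pi @^-1: [set a]).

(* phi_G(a,b) in Z/n (represented by its residue in [0, n), n = #[c0]):
   the k with [lift a, lift b] = c0^k. *)
Definition phi (gT aT : finGroupType) (G : {set gT}) (pi : gT -> aT) (c0 : gT)
    (a b : aT) : nat :=
  if [pick k : 'I_#[c0] | commP (lift G pi a) (lift G pi b) == c0 ^+ k]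
  is Some k then val k else 0.

(* Main.v *)
Require Import Defs.
From HB Require Import structures.
From mathcomp Require Import all_boot all_fingroup all_solvable.
Import GroupScope.
From mathcomp Require Import zify.

Section Helpers.
Set Implicit Arguments. Unset Strict Implicit.
Lemma commP_mulr (gT : finGroupType) (x y z : gT) :
  commute z y -> commP (x * z) y = commP x y.
Proof.
move=> zy; rewrite /commP invMg -!mulgA; congr (_ * _).
by rewrite mulgA zy -mulgA mulKVg.
Qed.

Lemma commP_mull (gT : finGroupType) (x y z : gT) :
  commute z x -> commP x (y * z) = commP x y.
Proof.
move=> zx; rewrite /commP invMg -!mulgA; congr (_ * (_ * _)).
by rewrite mulgA (commuteV zx) -mulgA mulKVg.
Qed.
Lemma liftP (gT aT : finGroupType) (G : {group gT}) (pi : {morphism G >-> aT}) x :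
  x \in G -> Defs.lift G pi (pi x) \in G /\ pi (Defs.lift G pi (pi x)) = pi x.
Proof.
move=> Gx; have : x \in G :&: pi @^-1: [set pi x] by rewrite !inE Gx eqxx.
move/mem_repr; rewrite /lift !inE => /andP[-> /eqP ->]; done.
Qed.

Lemma commP_phi (gT aT : finGroupType) (G : {group gT}) (A : {group aT})
  (pi : {morphism G >-> aT}) (c : gT) :
  abelian A -> pi @* G = A -> 'ker pi = <[c]> -> <[c]> \subset 'Z(G) ->
  forall g g', g \in G -> g' \in G ->
    commP g g' = c ^+ (phi G pi c (pi g) (pi g')).
Proof.
move=> abA imG kerG cZ g g' Gg Gg'.
have cent z y : z \in <[c]> -> y \in G -> commute z y.
  move=> zc Gy; have := subsetP cZ z zc; case/centerP=> _ zC.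
  exact: zC.
set l := Defs.lift G pi (pi g); set l' := Defs.lift G pi (pi g').
have [Gl pl] := liftP pi Gg; have [Gl' pl'] := liftP pi Gg'.
have kz : l^-1 * g \in <[c]>.
  by rewrite -kerG; apply/kerP; rewrite ?groupM ?groupV // morphM ?groupV // morphV // pl mulVg.
have kz' : l'^-1 * g' \in <[c]>.
  by rewrite -kerG; apply/kerP; rewrite ?groupM ?groupV // morphM ?groupV // morphV // pl' mulVg.
have -> : commP g g' = commP l l'.
  rewrite -{1}(mulKVg l g) commP_mulr; last exact: cent.
  by rewrite -{1}(mulKVg l' g') commP_mull //; apply: cent.
have kc : commP l l' \in <[c]>.
  rewrite -kerG; apply/kerP; first by rewrite /commP !(groupM, groupV).
  have Al : pi l \in A by rewrite -imG mem_morphim.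
  have Al' : pi l' \in A by rewrite -imG mem_morphim.
  rewrite /commP !(morphM, morphV, groupM, groupV) //.
  by rewrite (centsP abA _ Al _ Al') mulgK mulgV.
rewrite /phi -/l -/l'; case: pickP => [k /eqP //|none].
have [i ilt ei] := cyclePmin kc.
by have := none (Ordinal ilt); rewrite /= ei eqxx.
Qed.
Lemma gen_lifts (gT aT : finGroupType) (G : {group gT}) (A : {group aT})
  (pi : {morphism G >-> aT}) (c : gT) (r : nat) (e : 'I_r -> aT) (g : 'I_r -> gT) :
  pi @* G = A -> 'ker pi = <[c]> -> << \bigcup_(i < r) <[e i]> >> = A ->
  (forall i, g i \in G) -> (forall i, pi (g i) = e i) ->
  << c |: [set g i | i : 'I_r] >> = G.
Proof.
move=> imG kerG eA Gg eg.
set K := <<_>>.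
have Gc : c \in G by apply: (@dom_ker _ _ _ pi); rewrite kerG cycle_id.
have sKG : K \subset G.
  rewrite gen_subG subUset sub1set Gc /=; apply/subsetP => x /imsetP[i _ ->]; exact: Gg.
have kK : 'ker pi \subset K by rewrite kerG cycle_subG mem_gen // setU11.
have AK : A \subset pi @* K.
  rewrite -eA gen_subG; apply/bigcupsP => i _.
  by rewrite cycle_subG -(eg i) mem_morphim // mem_gen // setU1r // imset_f.
apply/eqP; rewrite eqEsubset sKG /=.
apply: subset_trans (_ : _ \subset pi @*^-1 (pi @* K)) _; last by rewrite morphimGK.
apply/subsetP => x Gx; apply/morphpreP; split => //.
by apply: (subsetP AK); rewrite -imG mem_morphim.
Qed.
Lemma card_abelian_gen (Q : finGroupType) (r : nat) (y : 'I_r -> Q) :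
  abelian << [set y i | i : 'I_r] >> ->
  (#| << [set y i | i : 'I_r] >> | <= \prod_(i < r) #[y i])%N.
Proof.
set K := << _ >> => abK.
have yK i : y i \in K by rewrite mem_gen // imset_f.
have gen s : ((\prod_(i <- s) <[y i]>)%G \subset K) &&
             (#|(\prod_(i <- s) <[y i]>)%G| <= \prod_(i <- s) #[y i])%N.
  elim: s => [|i s IH]; first by rewrite !big_nil /= sub1G cards1.
  case/andP: IH => sTK cT.
  rewrite !big_cons /= join_subG cycle_subG yK sTK /=.
  rewrite comm_joingE; last first.
    by apply: centC; apply: sub_abelian_cent2 abK _ _; rewrite // cycle_subG.
  have := mul_cardG <[y i]> (\prod_(j <- s) <[y j]>)%G.
  move=> eq; apply: leq_trans (_ : #|<[y i]>| * #|(\prod_(j <- s) <[y j]>)%G| <= _)%N.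
    by rewrite eq leq_pmulr ?cardG_gt0.
  by rewrite leq_mul.
have /andP[_ cT] := gen (index_enum 'I_r).
apply: leq_trans cT; apply: subset_leq_card.
rewrite gen_subG; apply/subsetP => x /imsetP[i _ ->].
rewrite bigprodGE mem_gen //; apply/bigcupP; exists i; rewrite ?cycle_id //.
Qed.
Lemma injm_card_le (aT rT : finGroupType) (S : {group aT}) (f : {morphism S >-> rT}) :
  (#|S| <= #|f @* S|)%N -> 'injm f.
Proof.
move=> le; have := card_morphim f S; rewrite setIid => e.
have kS : 'ker f \subset S by apply/subsetP => x /dom_ker.
have L := Lagrange kS.
have : (#|'ker f| <= 1)%N.
  rewrite -(@leq_pmul2r #|S : 'ker f|) ?mul1n; last by rewrite -e cardG_gt0.
  by rewrite L -e.
by rewrite -trivg_card_le1 => /eqP ->.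
Qed.

Lemma build_iso (gT hT : finGroupType) (G : {group gT}) (H : {group hT})
  (S : {group (gT * hT)%type}) :
  'injm (restrm (subsetT S) (fst_morphism gT hT)) ->
  'injm (restrm (subsetT S) (snd_morphism gT hT)) ->
  (fst_morphism gT hT) @* S = G -> (snd_morphism gT hT) @* S = H ->
  exists f : {morphism G >-> hT}, isom G H f /\ (forall p, p \in S -> f p.1 = p.2).
Proof.
set fS := restrm _ _; set sS := restrm _ _ => injf injs eG eH.
have eG' : fS @* S = G by rewrite restrmEsub.
have eH' : sS @* S = H by rewrite restrmEsub.
set inv := invm injf.
have iS : inv @* G = S by rewrite -eG' morphim_invm.
have sG : G \subset inv @*^-1 S.
  apply/subsetP => x Gx; apply/morphpreP; split; first by rewrite eG'.
  have Dx : x \in fS @* S by rewrite eG'.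
  have := mem_morphim inv Dx Gx.
  by rewrite iS.
exists (restrm sG (sS \o inv)); split.
  apply/isomP; split.
    by apply: injm_restrm; apply: injm_comp => //; apply: injm_invm.
  rewrite morphim_restrm setIid morphim_comp; idtac.
  by rewrite -eG' morphim_invm // eG' iS.
move=> p Sp /=.
have -> : p.1 = fS p by [].
change (sS (inv (fS p)) = p.2); rewrite /inv invmE //.
Qed.
Lemma pairM (gT hT : finGroupType) (a c : gT) (b d : hT) :
  ((a, b) : gT * hT) * (c, d) = (a * c, b * d).
Proof. by []. Qed.

Lemma pairX (gT hT : finGroupType) (a : gT) (b : hT) k :
  ((a, b) : gT * hT) ^+ k = (a ^+ k, b ^+ k).
Proof. by elim: k => // k IH; rewrite !expgS IH. Qed.

Lemma half_order (gT aT : finGroupType) (G : {group gT}) (pi : {morphism G >-> aT})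
  (c g : gT) d :
  'ker pi = <[c]> -> g \in G -> pi g ^+ d = 1 -> (0 < d)%N -> #[g] = (2 * d)%N ->
  exists k, g ^+ d = c ^+ k /\ (2 * k = #[c])%N.
Proof.
move=> kG Gg pd d0 og.
have : g ^+ d \in <[c]> by rewrite -kG; apply/kerP; rewrite ?groupX // morphX.
case/cyclePmin => k kl gk; exists k; split => //.
have : (#[c] %| 2 * k)%N.
  by rewrite order_dvdn mulnC expgM -gk -expgM mulnC -og expg_order.
have k0 : k <> 0%N.
  move=> k0; move: gk; rewrite k0 expg0 => /eqP; rewrite -order_dvdn og.
  move/(dvdn_leq d0) => H; clear -H d0; lia.
case/dvdnP => q hq; case: q hq => [|[|q]] hq; nia.
Qed.
Lemma comm_dec (gT : finGroupType) (x y : gT) : x * y = commP x y * (y * x).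
Proof. by rewrite /commP -!mulgA mulKg mulVg mulg1. Qed.
End Helpers.

Theorem mainTheorem8
  (gT hT aT : finGroupType) (n : nat) (cG : gT) (cH : hT)
  (G CG : {group gT}) (H CH : {group hT})
  (A : {group aT}) (r : nat) (e : 'I_r -> aT)
  (piG : {morphism G >-> aT}) (piH : {morphism H >-> aT}) :
  (0 < n)%N ->
  (* C = <c0> cyclic of order n, central in G and in H *)
  #[cG] = n -> #[cH] = n ->
  CG = <[cG]> :> {set gT} -> CH = <[cH]> :> {set hT} ->
  CG \subset 'Z(G) -> CH \subset 'Z(H) ->
  (* A finite abelian, A = <e_1> x ... x <e_r> (internal direct product) *)
  abelian A ->
  \big[dprod/1]_(i < r) <[e i]> = A ->
  (* surjections onto A with kernel C *)
  piG @* G = A -> 'ker piG = CG ->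
  piH @* H = A -> 'ker piH = CH ->
  (* phi_G = phi_H *)
  (forall a b, a \in A -> b \in A -> phi G piG cG a b = phi H piH cH a b) ->
  (* lifts of equal order d_i or 2 d_i *)
  (forall i : 'I_r, exists g, exists h,
      [/\ g \in G, h \in H, piG g = e i, piH h = e i &
          #[g] = #[h] /\ (#[g] = #[e i] \/ #[g] = (2 * #[e i])%N)]) ->
  exists f : {morphism G >-> hT},
    isom G H f /\ (forall k, f (cG ^+ k) = cH ^+ k).
Proof.
move=> n0 oG oH eCG eCH zG zH abA dA imG kG imH kH phiE lifts.
have eA : << \bigcup_(i < r) <[e i]> >> = A := bigdprodWY dA.
have kG' : 'ker piG = <[cG]> by rewrite kG eCG.
have kH' : 'ker piH = <[cH]> by rewrite kH eCH.
have zG' : <[cG]> \subset 'Z(G) by rewrite -eCG.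
have zH' : <[cH]> \subset 'Z(H) by rewrite -eCH.
have /fin_all_exists [gh Pgh] : forall i : 'I_r, exists p : (gT * hT)%type,
   [/\ p.1 \in G, p.2 \in H, piG p.1 = e i, piH p.2 = e i &
          #[p.1] = #[p.2] /\
          (#[p.1] = #[e i] \/ #[p.1] = (2 * #[e i])%N)].
  by move=> i; have [g [h P]] := lifts i; exists (g, h).
have Gg i : (gh i).1 \in G by case: (Pgh i).
have Hh i : (gh i).2 \in H by case: (Pgh i).
have pg i : piG (gh i).1 = e i by case: (Pgh i).
have ph i : piH (gh i).2 = e i by case: (Pgh i).
have Ae i : e i \in A by rewrite -imG -(pg i) mem_morphim.
set z : (gT * hT)%type := (cG, cH).
set X0 := z |: [set gh i | i : 'I_r].
set S := <<X0>>%G.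
have fstS : (fst_morphism gT hT) @* S = G.
  rewrite /= morphim_gen ?subsetT // morphimEsub ?subsetT // imsetU1 -imset_comp.
  exact: (gen_lifts imG kG' eA Gg pg).
have sndS : (snd_morphism gT hT) @* S = H.
  rewrite /= morphim_gen ?subsetT // morphimEsub ?subsetT // imsetU1 -imset_comp.
  exact: (gen_lifts imH kH' eA Hh ph).
have centG x y : x \in <[cG]> -> y \in G -> commute x y.
  by move=> xc Gy; have := subsetP zG' x xc; case/centerP=> _ xC; exact: xC.
have centH x y : x \in <[cH]> -> y \in H -> commute x y.
  by move=> xc Hy; have := subsetP zH' x xc; case/centerP=> _ xC; exact: xC.
have Gc : cG \in G by apply: (@dom_ker _ _ _ piG); rewrite kG' cycle_id.
have Hc : cH \in H by apply: (@dom_ker _ _ _ piH); rewrite kH' cycle_id.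
set Z := <[z]>.
have cZS : S \subset 'C(Z).
  rewrite cent_cycle gen_subG subUset sub1set cent1id /=.
  apply/subsetP => p /imsetP[i _ ->]; apply/cent1P.
  have := Gg i; have := Hh i; case: (gh i) => a b /= Hb Ga.
  by rewrite /commute !pairM (centG _ _ (cycle_id cG) Ga) (centH _ _ (cycle_id cH) Hb).
have nZ : S \subset 'N(Z) := subset_trans cZS (cent_sub _).
have ZS : Z \subset S by rewrite cycle_subG mem_gen // setU11.
have cardZ : (#|Z| <= n)%N.
  apply: (dvdn_leq n0); rewrite order_dvdn /z pairX; apply/eqP; change ((cG ^+ n, cH ^+ n) = ((1 : gT), (1 : hT))).
  by congr (_, _); [rewrite -oG | rewrite -oH]; apply: expg_order.
have commZ i j : commP (gh i) (gh j) \in Z.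
  have -> : commP (gh i) (gh j) =
      (commP (gh i).1 (gh j).1, commP (gh i).2 (gh j).2).
    by case: (gh i) => ? ?; case: (gh j).
  rewrite (commP_phi abA imG kG' zG' (Gg i) (Gg j)).
  rewrite (commP_phi abA imH kH' zH' (Hh i) (Hh j)) !pg !ph phiE // -pairX.
  exact: mem_cycle.
have powZ i : (gh i) ^+ #[e i] \in Z.
  have := Pgh i; case: (gh i) => a b [Ga Hb pa pb [oab [oa|oa]]] /=.
    rewrite pairX -oa expg_order oab expg_order; exact: group1.
  have d0 := order_gt0 (e i).
  have pa' : piG a ^+ #[e i] = 1 by rewrite pa expg_order.
  have pb' : piH b ^+ #[e i] = 1 by rewrite pb expg_order.
  have [k [ak kk]] := half_order kG' Ga pa' d0 oa.
  have [k' [bk kk']] := half_order kH' Hb pb' d0 (etrans (esym oab) oa).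
  have ekk : k' = k by lia.
  by rewrite pairX ak bk ekk -pairX mem_cycle.
have NZx i : gh i \in 'N(Z).
  by apply: (subsetP nZ); rewrite mem_gen // setU1r // imset_f.
set Y := << [set coset Z (gh i) | i : 'I_r] >>.
have SY : S / Z \subset Y.
  rewrite /quotient morphim_gen; last exact: subset_trans (subset_gen X0) nZ.
  rewrite gen_subG; apply/subsetP => u /morphimP[v Nv X0v ->].
  case/setU1P: X0v => [->|/imsetP[i _ ->]].
    by rewrite /= coset_id ?cycle_id // group1.
  by apply: mem_gen; apply/imsetP; exists i.
have abY : abelian Y.
  rewrite abelian_gen; apply/centsP => u /imsetP[i _ ->] v /imsetP[j _ ->].
  have NZc : commP (gh i) (gh j) \in 'N(Z) := subsetP nZ _ (subsetP ZS _ (commZ i j)).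
  rewrite /commute -!morphM // (comm_dec (gh i)) morphM ?(groupM, groupV) //.
  by rewrite /= coset_id ?commZ // mul1g.
have cardY := card_abelian_gen abY.
have oy i : (#[coset Z (gh i)] <= #[e i])%N.
  apply: (dvdn_leq (order_gt0 _)); rewrite order_dvdn -morphX //.
  by apply/eqP; apply: coset_id; apply: powZ.
have cardA : (\prod_(i < r) #[e i])%N = #|A| := bigdprod_card dA.
have cardG : #|G| = (n * #|A|)%N.
  have kGs : 'ker piG \subset G by apply/subsetP => x /dom_ker.
  rewrite -(Lagrange kGs); congr (_ * _)%N; first by rewrite -oG /= kG'.
  by rewrite -imG card_morphim setIid.
have cardH : #|H| = (n * #|A|)%N.
  have kHs : 'ker piH \subset H by apply/subsetP => x /dom_ker.
  rewrite -(Lagrange kHs); congr (_ * _)%N; first by rewrite -oH /= kH'.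
  by rewrite -imH card_morphim setIid.
have leS : (#|S| <= n * #|A|)%N.
  rewrite -(Lagrange ZS) -card_quotient //; apply: leq_mul => //.
  apply: leq_trans (subset_leq_card SY) _; apply: leq_trans cardY _.
  by rewrite -cardA; apply: leq_prod => i _.
have injf : 'injm (restrm (subsetT S) (fst_morphism gT hT)).
  by apply: injm_card_le; rewrite restrmEsub // fstS cardG.
have injs : 'injm (restrm (subsetT S) (snd_morphism gT hT)).
  by apply: injm_card_le; rewrite restrmEsub // sndS cardH.
have [f [isof fE]] := build_iso injf injs fstS sndS.
exists f; split => // k.
have Sz : z ^+ k \in S by rewrite groupX // mem_gen // setU11.
by have := fE _ Sz; rewrite /z pairX.
Qed.
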